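(* Let $R$ be a commutative semiring and $v:R\to M$ a surjective m-valuation. (i) If $\varphi$ is any supervaluation covering $v$, then $\varphi(a)$ is ghost for every $a\in Y(v)$. (ii) If $Y(v)=\emptyset$, then every surjective m-supervaluation covering $v$ is a supervaluation.
   Context: A bipotent semiring $M$: commutative monoid with absorbing $0$, total order compatible with multiplication, $0$ least, $x+y=\max(x,y)$. An m-valuation: multiplicative $v:R\to M$ with $v(0)=0$, $v(1)=1$, $v(a+b)\le\max(v(a),v(b))$. A supertropical monoid is a commutative monoid $U$ with absorbing $0$, idempotent $e$ with $ex=0\Rightarrow x=0$, and a total order on $eU$ making it a bipotent semiring; elements of $eU$ are ghost. It is a semiring if the addition $x+y:=y$ ($ex<ey$), $x$ ($ex>ey$), $ex$ ($ex=ey$) is associative and distributive. An m-supervaluation is a map $\varphi:R\to U$ with $\varphi(0)=0$, $\varphi(1)=1$, multiplicative, $e\varphi(a+b)\le\max(e\varphi(a),e\varphi(b))$; it covers $v$ if $eU=M$ and $e\varphi=v$; it is surjective if $U=\varphi(R)\cup e\varphi(R)$; it is a supervaluation if $U$ is a semiring. $Y(v):=\{ab: a,b\in R,\ \exists a'\in R\text{ with } v(a')<v(a),\ v(a'b)=v(ab)\neq0\}$. *)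

(* Defs.v *)
From HB Require Import structures.
From mathcomp Require Import all_boot all_algebra.
Set Implicit Arguments. Unset Strict Implicit. Unset Printing Implicit Defensive.
Import GRing.Theory.
Local Open Scope ring_scope.

(** Bipotent semiring: commutative monoid with absorbing 0, total order
    compatible with multiplication, 0 least; addition is max. *)
Record BipotentSemiring := {
  bs_car :> Type;
  bs_mul : bs_car -> bs_car -> bs_car;
  bs_one : bs_car;
  bs_zero : bs_car;
  bs_le : bs_car -> bs_car -> bool;
  bs_mulA : forall x y z, bs_mul x (bs_mul y z) = bs_mul (bs_mul x y) z;
  bs_mulC : forall x y, bs_mul x y = bs_mul y x;
  bs_mul1 : forall x, bs_mul bs_one x = x;
  bs_mul0 : forall x, bs_mul bs_zero x = bs_zero;
  bs_le_refl : forall x, bs_le x x;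
  bs_le_anti : forall x y, bs_le x y -> bs_le y x -> x = y;
  bs_le_trans : forall x y z, bs_le x y -> bs_le y z -> bs_le x z;
  bs_le_total : forall x y, bs_le x y || bs_le y x;
  bs_le_mul : forall x y z, bs_le x y -> bs_le (bs_mul x z) (bs_mul y z);
  bs_le0 : forall x, bs_le bs_zero x
}.

Definition bs_max (M : BipotentSemiring) (x y : M) : M :=
  if bs_le x y then y else x.
Definition bs_lt (M : BipotentSemiring) (x y : M) : Prop :=
  bs_le x y /\ x <> y.

Definition m_valuation (R : comPzSemiRingType) (M : BipotentSemiring)
  (v : R -> M) : Prop :=
  [/\ v 0 = bs_zero M, v 1 = bs_one M,
      forall a b, v (a * b) = bs_mul (v a) (v b) &
      forall a b, bs_le (v (a + b)) (bs_max (v a) (v b))].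

Definition valuation_surjective (R : Type) (M : BipotentSemiring) (v : R -> M) :=
  forall m : M, exists a, v a = m.

Definition in_Y (R : comPzSemiRingType) (M : BipotentSemiring) (v : R -> M)
  (c : R) : Prop :=
  exists a b, c = a * b /\
    exists a', bs_lt (v a') (v a) /\ v (a' * b) = v (a * b) /\
               v (a * b) <> bs_zero M.

(** The relation st_le is only meaningful on eU. *)
Record SupertropicalMonoid := {
  st_car :> Type;
  st_mul : st_car -> st_car -> st_car;
  st_one : st_car;
  st_zero : st_car;
  st_e : st_car;
  st_le : st_car -> st_car -> bool;
  st_mulA : forall x y z, st_mul x (st_mul y z) = st_mul (st_mul x y) z;
  st_mulC : forall x y, st_mul x y = st_mul y x;
  st_mul1 : forall x, st_mul st_one x = x;
  st_mul0 : forall x, st_mul st_zero x = st_zero;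
  st_ee : st_mul st_e st_e = st_e;
  st_e0 : forall x, st_mul st_e x = st_zero -> x = st_zero;
  st_le_refl : forall x, st_mul st_e x = x -> st_le x x;
  st_le_anti : forall x y, st_mul st_e x = x -> st_mul st_e y = y ->
      st_le x y -> st_le y x -> x = y;
  st_le_trans : forall x y z, st_mul st_e x = x -> st_mul st_e y = y ->
      st_mul st_e z = z -> st_le x y -> st_le y z -> st_le x z;
  st_le_total : forall x y, st_mul st_e x = x -> st_mul st_e y = y ->
      st_le x y || st_le y x;
  st_le_mul : forall x y z, st_mul st_e x = x -> st_mul st_e y = y ->
      st_mul st_e z = z -> st_le x y -> st_le (st_mul x z) (st_mul y z);
  st_le0 : forall x, st_mul st_e x = x -> st_le st_zero x
}.

Definition ghost (U : SupertropicalMonoid) (x : U) : Prop := st_mul (st_e U) x = x.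

Definition st_lt (U : SupertropicalMonoid) (x y : U) : bool :=
  st_le x y && ~~ st_le y x.

Definition st_max (U : SupertropicalMonoid) (x y : U) : U :=
  if st_le x y then y else x.

Definition st_add (U : SupertropicalMonoid) (x y : U) : U :=
  let ex := st_mul (st_e U) x in
  let ey := st_mul (st_e U) y in
  if st_lt ex ey then y else if st_lt ey ex then x else ex.

Definition st_is_semiring (U : SupertropicalMonoid) : Prop :=
  (forall x y z : U, st_add x (st_add y z) = st_add (st_add x y) z) /\
  (forall x y z : U, st_mul x (st_add y z) = st_add (st_mul x y) (st_mul x z)).

Definition m_supervaluation (R : comPzSemiRingType) (U : SupertropicalMonoid)
  (phi : R -> U) : Prop :=
  [/\ phi 0 = st_zero U, phi 1 = st_one U,
      forall a b, phi (a * b) = st_mul (phi a) (phi b) &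
      forall a b, st_le (st_mul (st_e U) (phi (a + b)))
                        (st_max (st_mul (st_e U) (phi a)) (st_mul (st_e U) (phi b)))].

Definition supervaluation (R : comPzSemiRingType) (U : SupertropicalMonoid)
  (phi : R -> U) : Prop := m_supervaluation phi /\ st_is_semiring U.

Definition sv_surjective (R : Type) (U : SupertropicalMonoid) (phi : R -> U) :=
  forall x : U, exists a, x = phi a \/ x = st_mul (st_e U) (phi a).

(** phi covers v, where the equality eU = M (as bipotent semirings) is made
    explicit by an identification iota : M -> U, a bijection onto eU
    preserving multiplication, unit (1_M |-> e), zero and order, and
    e * phi = iota o v. *)
Definition covers (R : Type) (M : BipotentSemiring) (U : SupertropicalMonoid)
  (v : R -> M) (phi : R -> U) (iota : M -> U) : Prop :=
  [/\ injective iota,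
      forall x : U, ghost x <-> exists m, x = iota m,
      forall m n, iota (bs_mul m n) = st_mul (iota m) (iota n),
      iota (bs_one M) = st_e U /\ iota (bs_zero M) = st_zero U &
      forall m n, bs_le m n = st_le (iota m) (iota n) /\
      forall a, st_mul (st_e U) (phi a) = iota (v a)].

(* Main.v *)
Require Import Defs.
From mathcomp Require Import all_boot all_algebra.
From Stdlib Require Import Classical.

Set Implicit Arguments. Unset Strict Implicit. Unset Printing Implicit Defensive.
Import GRing.Theory.
Local Open Scope ring_scope.

Lemma st_mulCA (U : SupertropicalMonoid) (x y z : U) :
  st_mul x (st_mul y z) = st_mul y (st_mul x z).
Proof. by rewrite st_mulA (st_mulC x y) -st_mulA. Qed.

Lemma eeK (U : SupertropicalMonoid) (x : U) :
  st_mul (st_e U) (st_mul (st_e U) x) = st_mul (st_e U) x.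
Proof. by rewrite st_mulA st_ee. Qed.

Lemma ghost_e (U : SupertropicalMonoid) (x : U) : ghost (st_mul (st_e U) x).
Proof. exact: eeK. Qed.

Lemma emul (U : SupertropicalMonoid) (x z : U) :
  st_mul (st_mul (st_e U) x) (st_mul (st_e U) z) = st_mul (st_e U) (st_mul z x).
Proof. by rewrite -st_mulA (st_mulCA x) eeK (st_mulC x z). Qed.

Lemma ltxx (U : SupertropicalMonoid) (p : U) : st_lt p p = false.
Proof. by rewrite /st_lt; case: (st_le p p). Qed.

Lemma cmpB (U : SupertropicalMonoid) (p q : U) : ghost p -> ghost q ->
  (st_lt p q /\ st_lt q p = false) \/ (st_lt q p /\ st_lt p q = false) \/
  [/\ p = q, st_lt p q = false & st_lt q p = false].
Proof.
move=> gp gq; rewrite /st_lt.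
case Hpq: (st_le p q); case Hqp: (st_le q p) => /=.
- by right; right; split=> //; exact: st_le_anti gp gq Hpq Hqp.
- by left.
- by right; left.
- by have := st_le_total gp gq; rewrite Hpq Hqp.
Qed.

Lemma lt_trans3 (U : SupertropicalMonoid) (p q r : U) : ghost p -> ghost q -> ghost r ->
  st_lt p q -> st_lt q r -> st_lt p r.
Proof.
move=> gp gq gr; rewrite /st_lt => /andP[pq qp] /andP[qr rq]; apply/andP; split.
  exact: st_le_trans gp gq gr pq qr.
apply/negP => rp; move/negP: qp; apply; exact: st_le_trans gq gr gp qr rp.
Qed.

Lemma addE_lt (U : SupertropicalMonoid) (x y : U) :
  st_lt (st_mul (st_e U) x) (st_mul (st_e U) y) -> st_add x y = y.
Proof. by rewrite /st_add => ->. Qed.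

Lemma addE_gt (U : SupertropicalMonoid) (x y : U) :
  st_lt (st_mul (st_e U) y) (st_mul (st_e U) x) -> st_add x y = x.
Proof.
rewrite /st_add => h; rewrite h; move: h; rewrite /st_lt => /andP[_ /negbTE ->].
by [] || rewrite andbF.
Qed.

Lemma addE_eq (U : SupertropicalMonoid) (x y : U) :
  st_mul (st_e U) x = st_mul (st_e U) y -> st_add x y = st_mul (st_e U) x.
Proof. by rewrite /st_add => ->; rewrite ltxx. Qed.

Lemma st_assoc (U : SupertropicalMonoid) (x y z : U) :
  st_add x (st_add y z) = st_add (st_add x y) z.
Proof.
have gX := ghost_e x; have gY := ghost_e y; have gZ := ghost_e z.
case: (cmpB gX gY) => [[a1 a2]|[[a1 a2]|[e1 a1 a2]]];
case: (cmpB gY gZ) => [[b1 b2]|[[b1 b2]|[e2 b1 b2]]];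
case: (cmpB gX gZ) => [[c1 c2]|[[c1 c2]|[e3 c1 c2]]];
rewrite /st_add;
do 4 rewrite /= ?eeK ?a1 ?a2 ?b1 ?b2 ?c1 ?c2 //.
all: exfalso; repeat match goal with
  | e : ?p = ?q |- _ => match p with st_mul _ _ => idtac end; repeat match goal with h : context[p] |- _ => rewrite e in h end; clear e
  end;
  repeat match goal with
  | h : is_true (st_lt ?p ?p) |- _ => by rewrite ltxx in h
  | h1 : is_true (st_lt ?p ?q), h2 : is_true (st_lt ?q ?r) |- _ =>
      let H := fresh in
      have H := lt_trans3 (ghost_e _) (ghost_e _) (ghost_e _) h1 h2;
      first [ by rewrite ltxx in H
            | match goal with h3 : st_lt p r = false |- _ => by rewrite h3 in H end
            | clear H; fail ]
  end.
Qed.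

Lemma lt_le (U : SupertropicalMonoid) (p q : U) : st_lt p q -> st_le p q.
Proof. by case/andP. Qed.

Lemma st_distr (U : SupertropicalMonoid) :
  (forall x y z : U, st_lt (st_mul (st_e U) x) (st_mul (st_e U) y) ->
     st_mul (st_e U) (st_mul z x) = st_mul (st_e U) (st_mul z y) ->
     ghost (st_mul z y)) ->
  forall w y z : U, st_mul w (st_add y z) = st_add (st_mul w y) (st_mul w z).
Proof.
move=> H w y z.
have hle : forall p q : U, st_lt (st_mul (st_e U) p) (st_mul (st_e U) q) ->
   st_le (st_mul (st_e U) (st_mul w p)) (st_mul (st_e U) (st_mul w q)).
  move=> p q /lt_le h.
  have := st_le_mul (ghost_e p) (ghost_e q) (ghost_e w) h.
  by rewrite !emul.
case: (cmpB (ghost_e y) (ghost_e z)) => [[l1 l2]|[[l1 l2]|[eq l1 l2]]].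
- rewrite (addE_lt l1).
  case: (cmpB (ghost_e (st_mul w y)) (ghost_e (st_mul w z))) => [[m1 m2]|[[m1 m2]|[eq' m1 m2]]].
  + by rewrite (addE_lt m1).
  + by move: m1; rewrite /st_lt (hle _ _ l1) andbF.
  + by rewrite (addE_eq eq') eq' (H _ _ _ l1 eq').
- rewrite (addE_gt l1).
  case: (cmpB (ghost_e (st_mul w y)) (ghost_e (st_mul w z))) => [[m1 m2]|[[m1 m2]|[eq' m1 m2]]].
  + by move: m1; rewrite /st_lt (hle _ _ l1) andbF.
  + by rewrite (addE_gt m1).
  + by rewrite (addE_eq eq') (H _ _ _ l1 (esym eq')).
- have eq' : st_mul (st_e U) (st_mul w y) = st_mul (st_e U) (st_mul w z).
    by rewrite -!emul eq.
  by rewrite (addE_eq eq) (addE_eq eq') st_mulCA.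
Qed.

Theorem theorem6p12 (R : comPzSemiRingType) (M : BipotentSemiring) (v : R -> M)
  (hv : m_valuation v) (hsurj : valuation_surjective v) :
  (forall (U : SupertropicalMonoid) (phi : R -> U) (iota : M -> U),
      supervaluation phi -> covers v phi iota ->
      forall c : R, in_Y v c -> ghost (phi c)) /\
  ((forall c : R, ~ in_Y v c) ->
   forall (U : SupertropicalMonoid) (phi : R -> U) (iota : M -> U),
      m_supervaluation phi -> sv_surjective phi -> covers v phi iota ->
      st_is_semiring U).
Proof.
split.
- move=> U phi iota [[p0 p1 pmul padd] [assoc distr]] [inj gh imul [i1 i0] hle].
  have hphi := (hle (bs_one M) (bs_one M)).2.
  have hl m n : st_le (iota m) (iota n) = bs_le m n by rewrite (hle m n).1.
  move=> c [a [b [-> [a' [[le neq] [eqv nz]]]]]].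
  have lt1 : st_lt (st_mul (st_e U) (phi a')) (st_mul (st_e U) (phi a)).
    rewrite !hphi /st_lt !hl le /=; apply/negP => h; apply: neq.
    exact: bs_le_anti le h.
  have s1 : st_add (phi a) (phi a') = phi a := addE_gt lt1.
  have := distr (phi b) (phi a) (phi a'); rewrite s1 -!pmul.
  have eq' : st_mul (st_e U) (phi (b * a)) = st_mul (st_e U) (phi (b * a')).
    by rewrite !hphi (mulrC b a) (mulrC b a') eqv.
  rewrite (addE_eq eq') => H.
  by rewrite /ghost (mulrC a b) {2}H.
- move=> hY U phi iota [p0 p1 pmul padd] surj [inj gh imul [i1 i0] hle].
  have hphi := (hle (bs_one M) (bs_one M)).2.
  have hl m n : st_le (iota m) (iota n) = bs_le m n by rewrite (hle m n).1.
  split; first exact: st_assoc.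
  apply: st_distr => x y z.
  have [b [-> | ->]] := surj y; last by move=> _ _; rewrite /ghost st_mulCA eeK.
  have [c [-> | ->]] := surj z; last by move=> _ _; rewrite /ghost st_mulA eeK.
  have [a [ha hca]] : exists a, st_mul (st_e U) x = iota (v a) /\
      st_mul (st_e U) (st_mul (phi c) x) = iota (v (c * a)).
    have [a [-> | ->]] := surj x; exists a.
      by rewrite -pmul !hphi.
    by rewrite eeK (st_mulCA (phi c)) eeK -pmul !hphi.
  rewrite ha hca -pmul !hphi => lt /inj eqz.
  have [z0|nz] := classic (v (c * b) = bs_zero M).
    have : st_mul (st_e U) (phi (c * b)) = st_zero U by rewrite hphi z0 i0.
    by move/st_e0 => ->; rewrite /ghost st_mulC st_mul0.
  exfalso; apply: (hY (c * b)); exists b, c; split; first by rewrite mulrC.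
  exists a; split; last by rewrite (mulrC a c) (mulrC b c) eqz; split.
  move: lt; rewrite /st_lt !hl => /andP[le nle]; split=> // e.
  by move: nle; rewrite e bs_le_refl.
Qed.
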